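(* Let $M$ be a weight sequence of moderate growth such that $\liminf_{k\to\infty}m_k^{1/k}>0$ and $\liminf_{k\to\infty}\mu_{Qk}/\mu_k>1$ for some $Q\in\mathbb{N}_{\ge2}$. Then $\mathcal{B}^{\{M\}}(\mathbb{R}^n)=\mathcal{B}^{\{\omega_M\}}(\mathbb{R}^n)$ and $\mathcal{B}^{\{M\}}(E)=\mathcal{B}^{\{\omega_M\}}(E)$ for every compact $E\subseteq\mathbb{R}^n$.
   Context: A weight sequence is given by an increasing sequence $1=\mu_0\le\mu_1\le\cdots$ via $M_k=\mu_0\cdots\mu_k=k!\,m_k$, with $M_k^{1/k}\to\infty$; it has moderate growth if $M_{j+k}\le C^{j+k}M_jM_k$ for some $C$ and all $j,k$. $\omega_M(t)=\sup_k\log(t^k/M_k)$; under the hypotheses $\omega_M$ is a weight function (continuous increasing, $\omega(0)=0$, $\omega\to\infty$, $\omega(2t)=O(\omega(t))$, $\omega(t)=O(t)$, $\log t=o(\omega(t))$, $\omega(e^t)$ convex). For a weight function $\omega$ (normalized $\omega|_{[0,1]}=0$), $\varphi^*(t)=\sup_{s\ge0}(st-\omega(e^s))$ and $W^x_k=\exp(\frac1x\varphi^*(xk))$. $\mathcal{B}^{\{M\}}(\mathbb{R}^n)$: smooth $f$ with $\sup_{x,\alpha}|\partial^\alpha f(x)|/(\rho^{|\alpha|}M_{|\alpha|})<\infty$ for some $\rho>0$. $\mathcal{B}^{\{\omega\}}(\mathbb{R}^n)$: smooth $f$ with $\sup_{x,\alpha}|\partial^\alpha f(x)|\exp(-\frac1\rho\varphi^*(\rho|\alpha|))<\infty$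 for some $\rho\in\mathbb{N}$. For compact $E$, $\mathcal{B}^{\{M\}}(E)$ consists of jets $F=(F^\alpha)$, $F^\alpha\in C^0(E)$, with $C,\rho>0$ such that $|F^\alpha(a)|\le C\rho^{|\alpha|}M_{|\alpha|}$ and $|(R^p_aF)^\alpha(b)|\le C\rho^{p+1}M_{p+1}\frac{|b-a|^{p+1-|\alpha|}}{(p+1-|\alpha|)!}$ for all $\alpha$, $p\ge|\alpha|$, $a,b\in E$, where $(R^p_aF)^\alpha(b)=F^\alpha(b)-\sum_{|\beta|\le p-|\alpha|}\frac{(b-a)^\beta}{\beta!}F^{\alpha+\beta}(a)$; and $\mathcal{B}^{\{\omega\}}(E)=\bigcup_{x>0}\mathcal{B}^{\{W^x\}}(E)$. *)

(* Defs.v *)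
From Stdlib Require Import Reals ClassicalEpsilon.
From mathcomp Require Import all_boot.
Set Implicit Arguments. Unset Strict Implicit. Unset Printing Implicit Defensive.
Open Scope R_scope.

(* ---------- generic supremum (0 if the set is empty or unbounded above) ---- *)
Definition Rsup (E : R -> Prop) : R :=
  match excluded_middle_informative (bound E /\ exists x, E x) with
  | left H => proj1_sig (completeness E (proj1 H) (proj2 H))
  | right _ => 0
  end.

Fixpoint Mseq (mu : nat -> R) (k : nat) : R :=
  match k with
  | O => mu O
  | S k' => Mseq mu k' * mu (S k')
  end.

Definition mseq (mu : nat -> R) (k : nat) : R := Mseq mu k / INR (k`!).

Definition weight_sequence (mu : nat -> R) : Prop :=
  mu O = 1 /\ (forall k, mu k <= mu (S k)) /\
  (forall B : R, exists N : nat, forall k : nat, (N < k)%nat ->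
      B <= Rpower (Mseq mu k) (/ INR k)).

Definition moderate_growth (mu : nat -> R) : Prop :=
  exists C : R, forall j k : nat,
    Mseq mu (j + k) <= C ^ (j + k) * Mseq mu j * Mseq mu k.

Definition omegaM (M : nat -> R) (t : R) : R :=
  Rsup (fun y => exists k : nat, y = ln (t ^ k / M k)).

Definition phistar (omega : R -> R) (t : R) : R :=
  Rsup (fun y => exists s : R, 0 <= s /\ y = s * t - omega (exp s)).

Definition Wseq (omega : R -> R) (x : R) (k : nat) : R :=
  exp (/ x * phistar omega (x * INR k)).

Definition pt (n : nat) := 'I_n -> R.
Definition mindex (n : nat) := {ffun 'I_n -> nat}.

Definition mzero (n : nat) : mindex n := [ffun _ => 0%N].
Definition mincr (n : nat) (a : mindex n) (i : 'I_n) : mindex n :=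
  [ffun j => if j == i then (a j).+1 else a j].
Definition madd (n : nat) (a b : mindex n) : mindex n := [ffun j => (a j + b j)%N].
Definition mabs (n : nat) (a : mindex n) : nat := (\sum_(i < n) a i)%N.
Definition mfact (n : nat) (a : mindex n) : nat := (\prod_(i < n) (a i)`!)%N.
Definition mpow (n : nat) (x : pt n) (a : mindex n) : R :=
  \big[Rmult/1]_(i < n) (x i ^ a i).

Definition shift (n : nat) (x : pt n) (i : 'I_n) (t : R) : pt n :=
  fun j => if j == i then x j + t else x j.

Definition vsub (n : nat) (b a : pt n) : pt n := fun i => b i - a i.
Definition norm (n : nat) (x : pt n) : R := sqrt (\big[Rplus/0]_(i < n) (x i ^ 2)).

Definition continuous_Rn (n : nat) (g : pt n -> R) : Prop :=
  forall x eps, 0 < eps -> exists delta, 0 < delta /\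
    forall y, norm (vsub y x) < delta -> Rabs (g y - g x) < eps.

(* D is the family of all partial derivatives of f: D alpha = d^alpha f,
   all continuous (so f is C^infinity). *)
Definition smooth_family (n : nat) (f : pt n -> R) (D : mindex n -> pt n -> R) : Prop :=
  (forall x, D (mzero n) x = f x) /\
  (forall a i x, derivable_pt_lim (fun t => D a (shift x i t)) 0 (D (mincr a i) x)) /\
  (forall a, continuous_Rn (D a)).

Definition B_M_Rn (M : nat -> R) (n : nat) (f : pt n -> R) : Prop :=
  exists D, smooth_family f D /\
  exists rho : R, 0 < rho /\ exists C : R, forall x a,
    Rabs (D a x) / (rho ^ mabs a * M (mabs a)) <= C.

Definition B_omega_Rn (omega : R -> R) (n : nat) (f : pt n -> R) : Prop :=
  exists D, smooth_family f D /\
  exists rho : nat, (1 <= rho)%N /\ exists C : R, forall x a,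
    Rabs (D a x) * exp (- (/ INR rho * phistar omega (INR rho * INR (mabs a)))) <= C.

Definition open_Rn (n : nat) (U : pt n -> Prop) : Prop :=
  forall x, U x -> exists eps, 0 < eps /\ forall y, norm (vsub y x) < eps -> U y.

Definition compact_Rn (n : nat) (E : pt n -> Prop) : Prop :=
  forall (I : Type) (U : I -> pt n -> Prop),
    (forall i, open_Rn (U i)) ->
    (forall x, E x -> exists i, U i x) ->
    exists l : list I, forall x, E x -> exists i, List.In i l /\ U i x.

Definition jet (n : nat) := mindex n -> pt n -> R.

Definition continuous_on (n : nat) (E : pt n -> Prop) (g : pt n -> R) : Prop :=
  forall a eps, E a -> 0 < eps -> exists delta, 0 < delta /\
    forall b, E b -> norm (vsub b a) < delta -> Rabs (g b - g a) < eps.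

Definition mof (n d : nat) (b : {ffun 'I_n -> 'I_d.+1}) : mindex n :=
  [ffun i => nat_of_ord (b i)].

Definition remainder (n : nat) (F : jet n) (p : nat) (a : pt n) (al : mindex n)
    (b : pt n) : R :=
  let d := (p - mabs al)%N in
  F al b -
  \big[Rplus/0]_(be : {ffun 'I_n -> 'I_d.+1} | (mabs (mof be) <= d)%N)
     (mpow (vsub b a) (mof be) / INR (mfact (mof be)) * F (madd al (mof be)) a).

Definition B_jet (N : nat -> R) (n : nat) (E : pt n -> Prop) (F : jet n) : Prop :=
  (forall al, continuous_on E (F al)) /\
  exists C rho : R, 0 < C /\ 0 < rho /\
  (forall al a, E a -> Rabs (F al a) <= C * rho ^ mabs al * N (mabs al)) /\
  (forall al (p : nat) a b, (mabs al <= p)%N -> E a -> E b ->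
     Rabs (remainder F p a al b) <=
       C * rho ^ (p + 1) * N (p + 1)%N *
       (norm (vsub b a) ^ (p + 1 - mabs al) / INR ((p + 1 - mabs al)`!))).

Definition B_omega_jet (omega : R -> R) (n : nat) (E : pt n -> Prop) (F : jet n) : Prop :=
  exists x : R, 0 < x /\ B_jet (Wseq omega x) E F.

(* Main.v *)
Require Import Defs.
From Stdlib Require Import Reals Lra Lia Psatz ClassicalEpsilon.
From mathcomp Require ssreflect ssrbool ssrnat.
Open Scope R_scope.
Set Implicit Arguments. Unset Strict Implicit.

Lemma Rsup_ub (E : R -> Prop) x : bound E -> E x -> x <= Rsup E.
Proof.
intros Hb Hx. unfold Rsup. destruct excluded_middle_informative as [H|H].
- destruct (completeness E (proj1 H) (proj2 H)) as [m [Hm1 Hm2]]; simpl. apply Hm1; auto.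
- exfalso; apply H; split; eauto.
Qed.

Lemma Rsup_le (E : R -> Prop) b : (exists x, E x) -> (forall x, E x -> x <= b) -> Rsup E <= b.
Proof.
intros Hn Hb. unfold Rsup. destruct excluded_middle_informative as [H|H].
- destruct (completeness E (proj1 H) (proj2 H)) as [m [Hm1 Hm2]]; simpl. apply Hm2. exact Hb.
- exfalso; apply H; split; auto. exists b; exact Hb.
Qed.

Lemma ln_le' x y : 0 < x -> x <= y -> ln x <= ln y.
Proof. intros Hx Hxy. destruct (Rle_lt_or_eq_dec _ _ Hxy) as [h|h].
- left; apply ln_increasing; auto. - subst; lra. Qed.

Lemma exp_le' x y : x <= y -> exp x <= exp y.
Proof. intros h. destruct (Rle_lt_or_eq_dec _ _ h) as [h'|h'].
- left; apply exp_increasing; auto. - subst; lra. Qed.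

Lemma pow_exp x n : 0 < x -> x ^ n = exp (INR n * ln x).
Proof. intros. rewrite <- ln_pow by auto. rewrite exp_ln; auto. apply pow_lt; auto. Qed.

Definition LM mu k := ln (Mseq mu k).

Lemma mu_mono mu : (forall k, mu k <= mu (S k)) -> forall i d, mu i <= mu (i + d)%nat.
Proof. intros H i d; induction d. rewrite Nat.add_0_r; lra.
rewrite Nat.add_succ_r. specialize (H (i+d)%nat). lra. Qed.

Lemma mu_ge1 mu : mu O = 1 -> (forall k, mu k <= mu (S k)) -> forall k, 1 <= mu k.
Proof. intros H0 H k. pose proof (mu_mono H O k). simpl in H1. lra. Qed.

Lemma M_ge1 mu : mu O = 1 -> (forall k, mu k <= mu (S k)) -> forall k, 1 <= Mseq mu k.
Proof. intros H0 H k. induction k; simpl. lra. pose proof (mu_ge1 H0 H (S k)). nra. Qed.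

Lemma LM_step mu k : mu O = 1 -> (forall k, mu k <= mu (S k)) ->
  LM mu (S k) = LM mu k + ln (mu (S k)).
Proof. intros H0 H. unfold LM; simpl. apply ln_mult.
pose proof (M_ge1 H0 H k); lra. pose proof (mu_ge1 H0 H (S k)); lra. Qed.

Lemma LM0 mu : mu O = 1 -> LM mu 0 = 0.
Proof. intros H0; unfold LM; simpl; rewrite H0; apply ln_1. Qed.

Lemma LM_ge0 mu : mu O = 1 -> (forall k, mu k <= mu (S k)) -> forall k, 0 <= LM mu k.
Proof. intros H0 H k. unfold LM. rewrite <- ln_1. apply ln_le'. lra. apply M_ge1; auto. Qed.

Lemma lnmu_ge0 mu : mu O = 1 -> (forall k, mu k <= mu (S k)) -> forall k, 0 <= ln (mu k).
Proof. intros H0 H k. rewrite <- ln_1. apply ln_le'. lra. apply mu_ge1; auto. Qed.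

Lemma lnmu_mono mu : mu O = 1 -> (forall k, mu k <= mu (S k)) -> forall i d, ln (mu i) <= ln (mu (i+d)%nat).
Proof. intros H0 H i d. apply ln_le'. pose proof (mu_ge1 H0 H i); lra. apply mu_mono; auto. Qed.

Lemma LM_d1 mu : mu O = 1 -> (forall k, mu k <= mu (S k)) ->
  forall K d, INR d * ln (mu K) <= LM mu (K + d) - LM mu K.
Proof. intros H0 H K d. induction d. rewrite Nat.add_0_r; simpl; lra.
rewrite Nat.add_succ_r, LM_step, S_INR by auto.
pose proof (lnmu_mono H0 H K (S d)). rewrite Nat.add_succ_r in H1. lra. Qed.

Lemma LM_d2 mu : mu O = 1 -> (forall k, mu k <= mu (S k)) ->
  forall K d, LM mu (K + d) - LM mu K <= INR d * ln (mu (K + d)%nat).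
Proof. intros H0 H K d. induction d. rewrite Nat.add_0_r; simpl; lra.
rewrite Nat.add_succ_r, LM_step, S_INR by auto.
pose proof (lnmu_mono H0 H (K + d) 1). rewrite Nat.add_1_r in H1.
pose proof (pos_INR d). nra. Qed.

Lemma lnterm mu s k : mu O = 1 -> (forall k, mu k <= mu (S k)) ->
  ln (exp s ^ k / Mseq mu k) = INR k * s - LM mu k.
Proof. intros H0 H. pose proof (M_ge1 H0 H k). unfold Rdiv, LM.
assert (0 < exp s ^ k) by (apply pow_lt, exp_pos).
assert (0 < / Mseq mu k) by (apply Rinv_0_lt_compat; lra).
rewrite ln_mult, ln_Rinv, ln_pow, ln_exp; try lra. apply exp_pos. Qed.

Lemma om_bound mu s : weight_sequence mu ->
  bound (fun y => exists k : nat, y = ln (exp s ^ k / Mseq mu k)).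
Proof. intros [H0 [H HB]]. destruct (HB (exp s)) as [N HN].
exists (INR N * Rabs s). intros y [k ->]. rewrite lnterm by auto.
pose proof (LM_ge0 H0 H k).
destruct (Compare_dec.le_lt_dec k N) as [h|h].
- pose proof (le_INR _ _ h). pose proof (pos_INR k). pose proof (Rle_abs s).
  pose proof (Rabs_pos s). nra.
- specialize (HN k (ssrbool.introT ssrnat.ltP h)). unfold Rpower in HN.
  apply ln_le' in HN; [|apply exp_pos]. rewrite !ln_exp in HN.
  assert (0 < INR k) by (apply lt_0_INR; lia).
  assert (INR k * s <= LM mu k).
  { unfold LM. apply Rmult_le_compat_l with (r := INR k) in HN; [|lra].
    rewrite <- Rmult_assoc, Rinv_r, Rmult_1_l in HN; lra. }
  pose proof (pos_INR N). pose proof (Rabs_pos s). nra.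
Qed.

Lemma om_ge mu s k : weight_sequence mu ->
  INR k * s - LM mu k <= omegaM (Mseq mu) (exp s).
Proof. intros WS. pose proof WS as [H0 [H _]]. unfold omegaM. apply Rsup_ub.
apply om_bound; auto. exists k. rewrite lnterm; auto. Qed.

Lemma om_le mu s b : weight_sequence mu ->
  (forall k, INR k * s - LM mu k <= b) -> omegaM (Mseq mu) (exp s) <= b.
Proof. intros WS Hb. pose proof WS as [H0 [H _]]. unfold omegaM. apply Rsup_le.
exists (ln (exp s ^ 0 / Mseq mu 0)); exists 0%nat; auto.
intros y [k ->]. rewrite lnterm; auto. Qed.

Lemma om_ge0 mu s : weight_sequence mu -> 0 <= omegaM (Mseq mu) (exp s).
Proof. intros WS. pose proof WS as [H0 _]. pose proof (om_ge s 0 WS).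
rewrite LM0 in H; simpl in H; lra. Qed.

Lemma ps_bound mu t : weight_sequence mu -> 0 <= t ->
  bound (fun y => exists s, 0 <= s /\ y = s * t - omegaM (Mseq mu) (exp s)).
Proof. intros WS Ht. destruct (INR_unbounded t) as [J HJ].
exists (LM mu J). intros y [s [Hs ->]]. pose proof (om_ge s J WS). nra. Qed.

Lemma ps_ge mu t s : weight_sequence mu -> 0 <= t -> 0 <= s ->
  s * t - omegaM (Mseq mu) (exp s) <= phistar (omegaM (Mseq mu)) t.
Proof. intros WS Ht Hs. unfold phistar. apply Rsup_ub. apply ps_bound; auto.
exists s; auto. Qed.

Lemma ps_le mu t b : weight_sequence mu -> 0 <= t ->
  (forall s, 0 <= s -> s * t - omegaM (Mseq mu) (exp s) <= b) ->
  phistar (omegaM (Mseq mu)) t <= b.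
Proof. intros WS Ht Hb. unfold phistar. apply Rsup_le.
exists (0 * t - omegaM (Mseq mu) (exp 0)); exists 0; split; auto; lra.
intros y [s [Hs ->]]; auto. Qed.

Lemma ps_lower mu K : weight_sequence mu ->
  LM mu K <= phistar (omegaM (Mseq mu)) (INR K).
Proof. intros WS. pose proof WS as [H0 [H _]].
set (s := ln (mu K)).
assert (Hs : 0 <= s) by (apply lnmu_ge0; auto).
assert (Hom : omegaM (Mseq mu) (exp s) <= INR K * s - LM mu K).
{ apply om_le; auto. intros j.
  destruct (Compare_dec.le_lt_dec j K) as [h|h].
  - assert (exists d, K = (j + d)%nat) as [d ->] by (exists (K - j)%nat; lia).
    pose proof (LM_d2 H0 H j d). unfold s. rewrite plus_INR. lra.
  - assert (exists d, j = (K + d)%nat) as [d ->] by (exists (j - K)%nat; lia).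
    pose proof (LM_d1 H0 H K d). unfold s. rewrite plus_INR. lra. }
pose proof (@ps_ge mu (INR K) s WS (pos_INR K) Hs). lra. Qed.

Lemma ps_upper mu x r k : weight_sequence mu -> 0 < x -> x <= INR r ->
  phistar (omegaM (Mseq mu)) (x * INR k) <= x / INR r * LM mu (r * k).
Proof. intros WS Hx HR. apply ps_le; auto.
pose proof (pos_INR k); nra.
intros s Hs. pose proof (om_ge0 s WS). pose proof (om_ge s (r * k) WS).
rewrite mult_INR in H0. set (a := x / INR r).
assert (0 < INR r) by lra.
assert (Ha : a <= 1). { unfold a. apply Rmult_le_reg_r with (INR r); auto.
  unfold Rdiv; rewrite Rmult_assoc, Rinv_l; lra. }
assert (Ha0 : 0 < a) by (unfold a; apply Rdiv_lt_0_compat; lra).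
assert (Hxa : x = a * INR r) by (unfold a; field; lra).
rewrite Hxa.
set (w := omegaM (Mseq mu) (exp s)) in *.
assert (a * (INR r * INR k * s) <= a * (w + LM mu (r * k))) by (apply Rmult_le_compat_l; lra).
nra. Qed.

Lemma mg_log mu A : mu O = 1 -> (forall k, mu k <= mu (S k)) ->
  (forall j k : nat, Mseq mu (j + k) <= A ^ (j + k) * Mseq mu j * Mseq mu k) ->
  1 <= A /\ forall j k, LM mu (j + k) <= INR (j + k) * ln A + LM mu j + LM mu k.
Proof. intros H0 H HA.
assert (A1 : 1 <= A).
{ specialize (HA 1%nat 0%nat). simpl in HA. rewrite H0 in HA.
  pose proof (M_ge1 H0 H 1). simpl in H1. rewrite H0 in H1. nra. }
split; auto. intros j k. specialize (HA j k).
pose proof (M_ge1 H0 H j). pose proof (M_ge1 H0 H k). pose proof (M_ge1 H0 H (j+k)).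
unfold LM. assert (0 < A ^ (j+k)) by (apply pow_lt; lra).
apply ln_le' in HA; [|lra]. rewrite !ln_mult, ln_pow in HA; try lra. nra. Qed.

Lemma mg_R mu A : mu O = 1 -> (forall k, mu k <= mu (S k)) -> 1 <= A ->
  (forall j k, LM mu (j + k) <= INR (j + k) * ln A + LM mu j + LM mu k) ->
  forall r k, LM mu (r * k) <= INR r * INR r * INR k * ln A + INR r * LM mu k.
Proof. intros H0 H A1 HL r k. assert (0 <= ln A) by (rewrite <- ln_1; apply ln_le'; lra).
induction r. simpl. rewrite LM0; auto; lra.
rewrite Nat.mul_succ_l. specialize (HL (r * k)%nat k). rewrite plus_INR, mult_INR in HL.
rewrite S_INR. pose proof (pos_INR r). pose proof (pos_INR k).
assert (0 <= INR r * INR k * ln A) by (apply Rmult_le_pos; [apply Rmult_le_pos|]; lra).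
nra. Qed.

Lemma pow_ge1 Q m : (1 <= Q)%nat -> (1 <= Q ^ m)%nat.
Proof. intros h; induction m; simpl; nia. Qed.

Lemma Q_iter mu Q N g : (1 <= Q)%nat ->
  (forall k, (N < k)%nat -> ln (mu k) + g <= ln (mu (Q * k)%nat)) ->
  forall m j, (N < j)%nat -> ln (mu j) + INR m * g <= ln (mu (Q ^ m * j)%nat).
Proof. intros HQ Hk m. induction m; intros j Hj. simpl. rewrite Nat.add_0_r; lra.
replace (Q ^ S m * j)%nat with (Q * (Q ^ m * j))%nat by (simpl; ring).
pose proof (pow_ge1 m HQ). specialize (IHm j Hj). specialize (Hk (Q ^ m * j)%nat ltac:(nia)).
rewrite S_INR. lra. Qed.

Lemma Q_lower mu Q N g : mu O = 1 -> (forall k, mu k <= mu (S k)) -> (2 <= Q)%nat -> 0 < g ->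
  (forall k, (N < k)%nat -> ln (mu k) + g <= ln (mu (Q * k)%nat)) ->
  forall h, exists P K, (1 <= P)%nat /\ forall k,
    INR P * (LM mu k + INR k * h - K) <= LM mu (P * k).
Proof. intros H0 H HQ Hg Hk h.
destruct (INR_unbounded (h / g)) as [n Hn].
set (m := S n). set (P := (Q ^ m * Q ^ m)%nat).
assert (Hmg : h <= INR m * g).
{ unfold m; rewrite S_INR. apply Rmult_gt_compat_r with (r := g) in Hn; auto.
  unfold Rdiv in Hn; rewrite Rmult_assoc, Rinv_l in Hn; lra. }
assert (HQm : (2 <= Q ^ m)%nat) by (unfold m; simpl; pose proof (pow_ge1 n (ltac:(lia) : (1 <= Q)%nat)); nia).
set (k0 := Nat.max N 1).
set (K := LM mu k0 + INR m * g * INR k0).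
exists P, K. split. unfold P; nia.
assert (Hstep : forall k, (k0 <= k)%nat ->
  INR P * (ln (mu (S k)) + INR m * g) <= LM mu (P * S k) - LM mu (P * k)).
{ intros k Hk0.
  pose proof (LM_d1 H0 H (P * k) P). replace (P * k + P)%nat with (P * S k)%nat in H1 by ring.
  assert (ln (mu (S k)) + INR m * g <= ln (mu (P * k)%nat)).
  { pose proof (Q_iter (ltac:(lia) : (1 <= Q)%nat) Hk m (j := S k) ltac:(lia)).
    assert (exists d, (P * k = Q ^ m * S k + d)%nat) as [d Hd].
    { exists (P * k - Q ^ m * S k)%nat. unfold P. nia. }
    rewrite Hd. pose proof (lnmu_mono H0 H (Q ^ m * S k) d). lra. }
  pose proof (pos_INR P). nra. }
assert (Hind : forall d, LM mu (P * k0) - INR P * (LM mu k0 + INR m * g * INR k0)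
   <= LM mu (P * (k0 + d)) - INR P * (LM mu (k0 + d) + INR m * g * INR (k0 + d))).
{ induction d. rewrite Nat.add_0_r; lra.
  rewrite Nat.add_succ_r, (LM_step _ H0 H), S_INR.
  specialize (Hstep (k0 + d)%nat ltac:(lia)). lra. }
intros k.
pose proof (pos_INR P). pose proof (pos_INR k).
assert (Hh : INR k * h <= INR m * g * INR k) by nra.
destruct (Compare_dec.le_lt_dec k0 k) as [hk|hk].
- assert (exists d, k = (k0 + d)%nat) as [d ->] by (exists (k - k0)%nat; lia).
  specialize (Hind d). pose proof (LM_ge0 H0 H (P * k0)). unfold K. nra.
- assert (exists d, k0 = (k + d)%nat) as [d Hd] by (exists (k0 - k)%nat; lia).
  pose proof (LM_d1 H0 H k d). rewrite <- Hd in H3. pose proof (lnmu_ge0 H0 H k).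
  pose proof (pos_INR d). assert (INR k <= INR k0) by (apply le_INR; lia).
  pose proof (LM_ge0 H0 H (P * k)). pose proof (pos_INR m).
  assert (0 <= INR m * g * (INR k0 - INR k)) by (apply Rmult_le_pos; nra).
  assert (LM mu k + INR k * h - K <= 0) by (unfold K; nra).
  nra.
Qed.

Lemma jet_transfer (N N' : nat -> R) h n (E : pt n -> Prop) F : 0 < h ->
  (forall k, N k <= h ^ k * N' k) -> B_jet N E F -> B_jet N' E F.
Proof. intros Hh HN [Hc [C [rho [HC [Hr [H1 H2]]]]]]. split; auto.
exists C, (rho * h). split; auto. split. nra. split.
- intros al a Ea. eapply Rle_trans; [apply H1; auto|].
  rewrite Rpow_mult_distr. specialize (HN (mabs al)).
  assert (0 <= C * rho ^ mabs al) by (apply Rmult_le_pos; [lra| apply pow_le; lra]).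
  assert (C * rho ^ mabs al * N (mabs al) <= C * rho ^ mabs al * (h ^ mabs al * N' (mabs al)))
   by (apply Rmult_le_compat_l; auto). lra.
- intros al p a b Hp Ea Eb. eapply Rle_trans; [apply H2; auto|].
  set (S := norm (vsub b a) ^ _ / _).
  assert (0 <= S). { unfold S. apply Rmult_le_pos. apply pow_le. unfold norm. apply sqrt_pos.
    left; apply Rinv_0_lt_compat, lt_0_INR. apply (ssrbool.elimT ssrnat.ltP). apply ssrnat.fact_gt0. }
  rewrite Rpow_mult_distr. specialize (HN (ssrnat.addn p 1)).
  assert (0 <= C * rho ^ (ssrnat.addn p 1)) by (apply Rmult_le_pos; [lra| apply pow_le; lra]).
  assert (C * rho ^ (ssrnat.addn p 1) * N (ssrnat.addn p 1) <= C * rho ^ (ssrnat.addn p 1) * (h ^ (ssrnat.addn p 1) * N' (ssrnat.addn p 1)))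
   by (apply Rmult_le_compat_l; auto).
  apply Rmult_le_compat_r; auto. lra.
Qed.

Lemma main_aux (mu : nat -> R) :
  weight_sequence mu ->
  moderate_growth mu ->
  (exists Q : nat, (2 <= Q)%nat /\ exists c : R, 1 < c /\ exists N : nat,
      forall k : nat, (N < k)%nat -> c <= mu (Q * k)%nat / mu k) ->
  (forall (n : nat) (f : pt n -> R),
      B_M_Rn (Mseq mu) f <-> B_omega_Rn (omegaM (Mseq mu)) f) /\
  (forall (n : nat) (E : pt n -> Prop), compact_Rn E ->
      forall F : jet n, B_jet (Mseq mu) E F <-> B_omega_jet (omegaM (Mseq mu)) E F).
Proof.
intros WS [A HA] [Q [HQ2 [c [Hc [N HN]]]]].
pose proof WS as [H0 [H _]].
destruct (mg_log H0 H HA) as [A1 HL].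
pose proof (mg_R H0 H A1 HL) as HR.
assert (HQ2' := HQ2).
assert (Hk : forall k, (N < k)%nat -> ln (mu k) + ln c <= ln (mu (Q * k)%nat)).
{ intros k Hlt. pose proof (HN k Hlt) as Hck.
  pose proof (mu_ge1 H0 H k). pose proof (mu_ge1 H0 H (Q * k)%nat).
  assert (c * mu k <= mu (Q * k)%nat).
  { apply Rmult_le_reg_r with (/ mu k). apply Rinv_0_lt_compat; lra.
    rewrite Rmult_assoc, Rinv_r by lra. rewrite Rmult_1_r. exact Hck. }
  rewrite <- ln_mult by lra. apply ln_le'; nra. }
assert (Hg : 0 < ln c) by (rewrite <- ln_1; apply ln_increasing; lra).
assert (Mpos : forall k, 0 < Mseq mu k) by (intro k; pose proof (M_ge1 H0 H k); lra).
assert (Wup : forall (x : R) (r : nat), 0 < x -> x <= INR r -> forall k,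
   / x * phistar (omegaM (Mseq mu)) (x * INR k) <= INR r * INR k * ln A + LM mu k).
{ intros x r Hx Hr k. pose proof (ps_upper k WS Hx Hr). specialize (HR r k).
  assert (0 < INR r) by lra.
  apply Rmult_le_compat_l with (r := / x) in H1; [|left; apply Rinv_0_lt_compat; lra].
  eapply Rle_trans; [exact H1|].
  replace (/ x * (x / INR r * LM mu (r * k))) with (LM mu (r * k) / INR r) by (field; lra).
  apply Rmult_le_reg_r with (INR r); auto. unfold Rdiv. rewrite Rmult_assoc, Rinv_l by lra.
  nra. }
assert (expW : forall r k, 0 < A -> (A ^ r) ^ k * Mseq mu k = exp (INR r * INR k * ln A + LM mu k)).
{ intros r k HA0. rewrite exp_plus. unfold LM. rewrite exp_ln by auto.
  rewrite <- pow_mult, pow_exp by lra. rewrite mult_INR. reflexivity. }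
split.
- intros n f. split.
  + intros [D [Hs [rho [Hrho [C HC]]]]].
    destruct (Q_lower H0 H HQ2' Hg Hk (ln rho)) as [P [K [HP HPK]]].
    exists D. split; auto. exists P. split. apply (ssrbool.introT ssrnat.leP); exact HP.
    exists (exp K * C). intros x a. specialize (HC x a).
    set (k := mabs a) in *.
    pose proof (ps_lower (P * k) WS). rewrite mult_INR in H1. specialize (HPK k).
    assert (0 < INR P) by (apply lt_0_INR; lia).
    assert (H3 : LM mu k + INR k * ln rho - K <= / INR P * phistar (omegaM (Mseq mu)) (INR P * INR k)).
    { apply Rmult_le_reg_l with (INR P); auto. rewrite <- Rmult_assoc, Rinv_r by lra. lra. }
    assert (E1 : exp (- (/ INR P * phistar (omegaM (Mseq mu)) (INR P * INR k))) <=
                 exp K * / (rho ^ k * Mseq mu k)).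
    { rewrite (pow_exp k Hrho). unfold LM in H3. rewrite <- (exp_ln (Mseq mu k)) by auto.
      rewrite <- exp_plus, <- exp_Ropp, <- exp_plus. apply exp_le'. lra. }
    pose proof (Rabs_pos (D a x)).
    eapply Rle_trans. apply Rmult_le_compat_l; [exact H4| exact E1].
    replace (Rabs (D a x) * (exp K * / (rho ^ k * Mseq mu k))) with
      (exp K * (Rabs (D a x) / (rho ^ k * Mseq mu k))) by (unfold Rdiv; ring).
    apply Rmult_le_compat_l; auto. left; apply exp_pos.
  + intros [D [Hs [rho [Hrho [C HC]]]]].
    exists D. split; auto. exists (A ^ rho). split. apply pow_lt; lra.
    exists C. intros x a. specialize (HC x a). set (k := mabs a) in *.
    assert (Hr1 : 0 < INR rho) by (apply lt_0_INR; apply (ssrbool.elimT ssrnat.ltP); exact Hrho).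
    pose proof (Wup (INR rho) rho Hr1 (Rle_refl _) k).
    rewrite expW by lra.
    unfold Rdiv. rewrite <- exp_Ropp.
    eapply Rle_trans; [|exact HC]. apply Rmult_le_compat_l. apply Rabs_pos.
    apply exp_le'. lra.
- intros n E _ F. split.
  + intros HB. exists 1. split. lra.
    apply (@jet_transfer (Mseq mu) _ 1); auto. lra. intros k. rewrite pow1, Rmult_1_l.
    unfold Wseq. rewrite Rinv_1, Rmult_1_l, Rmult_1_l.
    rewrite <- (exp_ln (Mseq mu k)) by auto. apply exp_le'. apply ps_lower; auto.
  + intros [x [Hx HB]].
    destruct (INR_unbounded x) as [r Hr].
    apply (@jet_transfer _ (Mseq mu) (A ^ r)) in HB; auto. apply pow_lt; lra.
    intros k. rewrite expW by lra. unfold Wseq. apply exp_le'.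
    apply Wup; auto. lra.
Qed.

From mathcomp Require Import all_boot.
Open Scope R_scope.


Theorem lemma5p8 (mu : nat -> R) :
  weight_sequence mu ->
  moderate_growth mu ->
  (* liminf_k m_k^{1/k} > 0 *)
  (exists c : R, 0 < c /\ exists N : nat, forall k : nat, (N < k)%nat ->
      c <= Rpower (mseq mu k) (/ INR k)) ->
  (* liminf_k mu_{Qk}/mu_k > 1 for some Q >= 2 *)
  (exists Q : nat, (2 <= Q)%nat /\ exists c : R, 1 < c /\ exists N : nat,
      forall k : nat, (N < k)%nat -> c <= mu (Q * k)%nat / mu k) ->
  (forall (n : nat) (f : pt n -> R),
      B_M_Rn (Mseq mu) f <-> B_omega_Rn (omegaM (Mseq mu)) f) /\
  (forall (n : nat) (E : pt n -> Prop), compact_Rn E ->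
      forall F : jet n, B_jet (Mseq mu) E F <-> B_omega_jet (omegaM (Mseq mu)) E F).
Proof.
intros WS MG _ [Q [HQ2 [c [Hc [N HN]]]]]. apply main_aux; auto.
exists Q. split. apply/leP; exact HQ2. exists c. split; auto. exists N.
intros k Hk. apply HN. apply/ltP; exact Hk.
Qed.
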